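(* Consider a market with $n$ buyers and $m$ sellers trading units of a single item. Buyer $i$ has a bid $b_i \in \mathbb{R}_+$ and a quantity $\mu_i \in \mathbb{R}_+$ (it is willing to buy up to $\mu_i$ units at a per-unit price of at most $b_i$). Seller $j$ has an ask (cost) $c_j \in \mathbb{R}_+$ and a quantity $\lambda_j \in \mathbb{R}_+$. Let $\mathcal{Z}$ be a feature space. Suppose that, conditioned on each feature vector $z \in \mathcal{Z}$, the bids and costs are independent with $b_i \sim F_i^z$ and $c_j \sim G_j^z$, where $F_i^z, G_j^z$ are cumulative distribution functions. For a pricing policy $p:\mathcal{Z}\to\mathbb{R}$, the clearing loss is $$\ell^c(p,z,\mathbf{b},\mathbf{c}) = \sum_{i=1}^n \mu_i \max\{b_i - p(z),0\} + \sum_{j=1}^m \lambda_j \max\{p(z)-c_j,0\}.$$ Then the pricing policy that minimizes the expected clearing loss (conditional on each $z$) is the solution $p(z)$ of $$\sum_{i=1}^n \mu_i\bigl(1-F_i^z(p(z))\bigr) = \sum_{j=1}^m \lambda_j G_j^z(p(z)),$$ i.e., the policy that balances expected supply and demand.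
   Context: The quantities $\mu_i$ and $\lambda_j$ and the numbers $n,m$ are fixed; only the bids and costs are random given $z$. Expectations are taken over the bids and costs conditional on the feature vector $z$. *)

(* Defs.v *)
From HB Require Import structures.
From mathcomp Require Import all_boot all_order all_algebra.
From mathcomp Require Import all_classical all_reals all_analysis.
Set Implicit Arguments. Unset Strict Implicit. Unset Printing Implicit Defensive.
Import Order.TTheory GRing.Theory Num.Theory.
Local Open Scope classical_set_scope.
Local Open Scope ring_scope.

Definition clearing_loss (R : realType) (n m : nat)
  (mu : 'I_n -> R) (lam : 'I_m -> R) (pz : R)
  (bv : 'I_n -> R) (cv : 'I_m -> R) : R :=
  \sum_(i < n) mu i * Num.max (bv i - pz) 0
  + \sum_(j < m) lam j * Num.max (pz - cv j) 0.

Definition expected_clearing_loss (R : realType) (d : measure_display)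
  (Omega : measurableType d) (P : probability Omega R) (n m : nat)
  (mu : 'I_n -> R) (lam : 'I_m -> R) (pz : R)
  (b : 'I_n -> Omega -> R) (c : 'I_m -> Omega -> R) : \bar R :=
  (\int[P]_(w in setT) (clearing_loss mu lam pz (fun i => b i w) (fun j => c j w))%:E)%E.

Definition independent_bids_costs (R : realType) (d : measure_display)
  (Omega : measurableType d) (P : probability Omega R) (n m : nat)
  (b : 'I_n -> Omega -> R) (c : 'I_m -> Omega -> R) : Prop :=
  forall (A : 'I_n -> set R) (B : 'I_m -> set R),
    (forall i, measurable (A i)) -> (forall j, measurable (B j)) ->
    P ((\bigcap_(i in [set: 'I_n]) (b i @^-1` A i))
         `&` (\bigcap_(j in [set: 'I_m]) (c j @^-1` B j)))
    = (\prod_(i < n) P (b i @^-1` A i) * \prod_(j < m) P (c j @^-1` B j))%E.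

(* Main.v *)
Require Import Defs.
From HB Require Import structures.
From mathcomp Require Import all_boot all_order all_algebra.
From mathcomp Require Import all_classical all_reals all_analysis.
From mathcomp Require Import lra measurable_realfun measurable_fun_approximation lebesgue_integral_nonneg lebesgue_integral_monotone_convergence lebesgue_integral_definition probability_measure.
Import Order.TTheory GRing.Theory Num.Theory.
Local Open Scope classical_set_scope.
Local Open Scope ring_scope.

Lemma maxcase (R : realType) (x : R) :
  (Num.max x 0 = x /\ 0 <= x) \/ (Num.max x 0 = 0 /\ x <= 0).
Proof.
have [h|h] := leP 0 x.
  by left; split => //; rewrite max_l.
right; have hl : x <= 0 := ltW h; split => //; by rewrite max_r.
Qed.

Section Ineq.
Variable R : realType.
Implicit Types x y p q I J : R.

Lemma buyerA x p q I : p <= q -> (I = 1 /\ p < x \/ I = 0 /\ x <= p) ->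
  Num.max (x - p) 0 <= Num.max (x - q) 0 + (q - p) * I.
Proof.
move=> hpq hI; case: (@maxcase _ (x - p)) => [[-> h1]|[-> h1]];
case: (@maxcase _ (x - q)) => [[-> h2]|[-> h2]];
case: hI => [[-> h3]|[-> h3]]; lra.
Qed.

Lemma buyerB x p q I : q < p -> (I = 1 /\ p < x \/ I = 0 /\ x <= p) ->
  Num.max (x - p) 0 + (p - q) * I <= Num.max (x - q) 0.
Proof.
move=> hpq hI; case: (@maxcase _ (x - p)) => [[-> h1]|[-> h1]];
case: (@maxcase _ (x - q)) => [[-> h2]|[-> h2]];
case: hI => [[-> h3]|[-> h3]]; lra.
Qed.

Lemma sellerA y p q J : p <= q -> (J = 1 /\ y <= p \/ J = 0 /\ p < y) ->
  Num.max (p - y) 0 + (q - p) * J <= Num.max (q - y) 0.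
Proof.
move=> hpq hI; case: (@maxcase _ (p - y)) => [[-> h1]|[-> h1]];
case: (@maxcase _ (q - y)) => [[-> h2]|[-> h2]];
case: hI => [[-> h3]|[-> h3]]; lra.
Qed.

Lemma sellerB y p q J : q < p -> (J = 1 /\ y <= p \/ J = 0 /\ p < y) ->
  Num.max (p - y) 0 <= Num.max (q - y) 0 + (p - q) * J.
Proof.
move=> hpq hI; case: (@maxcase _ (p - y)) => [[-> h1]|[-> h1]];
case: (@maxcase _ (q - y)) => [[-> h2]|[-> h2]];
case: hI => [[-> h3]|[-> h3]]; lra.
Qed.

Lemma scale_le (m a b : R) : 0 <= m -> a <= b -> m * a <= m * b.
Proof. by move=> hm hab; rewrite ler_wpM2l. Qed.
End Ineq.

Lemma indicB (T : Type) (R : realType) (f : T -> R) (p : R) w :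
  (\1_(~` [set w | f w <= p]) w = 1 :> R /\ p < f w) \/
  (\1_(~` [set w | f w <= p]) w = 0 :> R /\ f w <= p).
Proof.
rewrite indicE; case: (boolP (w \in _)) => h.
  left; split => //; rewrite in_setE /= in h.
  by rewrite ltNge; apply/negP.
right; split => //; move/negP: h; rewrite in_setE /=.
by apply: contrapT.
Qed.

Lemma indicC (T : Type) (R : realType) (f : T -> R) (p : R) w :
  (\1_([set w | f w <= p]) w = 1 :> R /\ f w <= p) \/
  (\1_([set w | f w <= p]) w = 0 :> R /\ p < f w).
Proof.
rewrite indicE; case: (boolP (w \in _)) => h.
  by left; split => //; rewrite in_setE /= in h.
right; split => //; move/negP: h; rewrite in_setE /= => h.
by rewrite ltNge; apply/negP.
Qed.
Section S.
Context (R : realType) (d : measure_display) (Omega : measurableType d).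
Variable P : probability Omega R.
Local Open Scope ereal_scope.

Lemma key (f1 f2 X Y : Omega -> R) (k : R) :
  (forall w, 0 <= f1 w)%R -> (forall w, 0 <= f2 w)%R ->
  (forall w, 0 <= X w)%R -> (forall w, 0 <= Y w)%R -> (0 <= k)%R ->
  measurable_fun setT f1 -> measurable_fun setT f2 ->
  measurable_fun setT X -> measurable_fun setT Y ->
  (forall w, f2 w + k * Y w <= f1 w + k * X w)%R ->
  \int[P]_(w in setT) (X w)%:E = \int[P]_(w in setT) (Y w)%:E ->
  \int[P]_(w in setT) (X w)%:E \is a fin_num ->
  \int[P]_(w in setT) (f2 w)%:E <= \int[P]_(w in setT) (f1 w)%:E.
Proof.
move=> f10 f20 X0 Y0 k0 mf1 mf2 mX mY hle hXY hfin.
have := @ge0_le_integral _ _ _ P setT measurableT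
  (fun w => (f2 w)%:E + (k%:E * (Y w)%:E)) (fun w => (f1 w)%:E + (k%:E * (X w)%:E)).
have mE : forall g : Omega -> R, measurable_fun setT g ->
    measurable_fun setT (fun w => (g w)%:E) by move=> g mg; exact/measurable_EFinP.
have mEk : forall g : Omega -> R, measurable_fun setT g ->
    measurable_fun setT (fun w => k%:E * (g w)%:E).
  by move=> g mg; apply: emeasurable_funM => //; exact: mE.
have g0 : forall g : Omega -> R, (forall w, 0 <= g w)%R ->
    forall w, 0 <= k%:E * (g w)%:E by move=> g hg w; rewrite -EFinM lee_fin mulr_ge0.
rewrite !ge0_integralD //; try by [move=> w _; rewrite lee_fin | move=> w _; exact: g0 | exact: mE | exact: mEk].
rewrite !ge0_integralZl_EFin //; try by [move=> w _; rewrite lee_fin | exact: mE].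
rewrite -hXY.
have hf : k%:E * \int[P]_(w in setT) (X w)%:E \is a fin_num by rewrite fin_numM.
rewrite leeD2rE //; apply.
- by move=> w _; rewrite -EFinM -EFinD lee_fin addr_ge0 // mulr_ge0.
- by apply: emeasurable_funD => //; [exact: mE| exact: mEk].
- by apply: emeasurable_funD => //; [exact: mE| exact: mEk].
- by move=> w _; rewrite -!EFinM -!EFinD lee_fin.
Qed.
End S.

Theorem mainTheorem1 (R : realType) (d : measure_display)
  (Omega : measurableType d) (Z : Type) (n m : nat)
  (mu : 'I_n -> R) (lam : 'I_m -> R)
  (P : Z -> probability Omega R)
  (b : 'I_n -> Omega -> R) (c : 'I_m -> Omega -> R)
  (F : Z -> 'I_n -> R -> R) (G : Z -> 'I_m -> R -> R)
  (hmu : forall i, 0 <= mu i) (hlam : forall j, 0 <= lam j)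
  (hb_meas : forall i, measurable_fun setT (b i))
  (hc_meas : forall j, measurable_fun setT (c j))
  (hb_nonneg : forall i w, 0 <= b i w)
  (hc_nonneg : forall j w, 0 <= c j w)
  (hindep : forall z, independent_bids_costs (P z) b c)
  (hF : forall z i x, P z [set w | b i w <= x] = (F z i x)%:E)
  (hG : forall z j x, P z [set w | c j w <= x] = (G z j x)%:E)
  (p : Z -> R)
  (hbalance : forall z,
     \sum_(i < n) mu i * (1 - F z i (p z)) = \sum_(j < m) lam j * G z j (p z)) :
  forall (q : Z -> R) (z : Z),
    (expected_clearing_loss (P z) mu lam (p z) b c
     <= expected_clearing_loss (P z) mu lam (q z) b c)%E.
Proof.
move=> q z.
set pz := p z; set qz := q z.
have hbal := hbalance z; rewrite -/pz in hbal.
set loss := fun x w => clearing_loss mu lam x (fun i => b i w) (fun j => c j w).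
have mloss : forall x, measurable_fun setT (loss x).
  move=> x; rewrite /loss /clearing_loss; apply: measurable_funD.
    apply: measurable_sum => i; apply: measurable_funM; first exact: measurable_cst.
    apply: measurable_maxr; last exact: measurable_cst.
    by apply: measurable_funB => //; exact: measurable_cst.
  apply: measurable_sum => j; apply: measurable_funM; first exact: measurable_cst.
  apply: measurable_maxr; last exact: measurable_cst.
  by apply: measurable_funB => //; exact: measurable_cst.
have loss0 : forall x w, 0 <= loss x w.
  move=> x w; rewrite /loss /clearing_loss; apply: addr_ge0; apply: sumr_ge0 => i _;
  by apply: mulr_ge0 => //; rewrite le_max lexx orbT.
set SB := fun i => ~` [set w | b i w <= pz].
set SC := fun j => [set w | c j w <= pz].
have mSC : forall j, measurable (SC j).
  move=> j; by have := measurable_fun_le measurableT (hc_meas j) (measurable_cst pz); rewrite setTI.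
have mSB : forall i, measurable (SB i).
  move=> i; apply: measurableC.
  by have := measurable_fun_le measurableT (hb_meas i) (measurable_cst pz); rewrite setTI.
pose Xs := fun w => \sum_(j < m) lam j * \1_(SC j) w.
pose Yb := fun w => \sum_(i < n) mu i * \1_(SB i) w.
have mXs : measurable_fun setT Xs.
  apply: measurable_sum => j; apply: measurable_funM; first exact: measurable_cst.
  exact: measurable_indic.
have mYb : measurable_fun setT Yb.
  apply: measurable_sum => j; apply: measurable_funM; first exact: measurable_cst.
  exact: measurable_indic.
have Xs0 : forall w, 0 <= Xs w.
  by move=> w; apply: sumr_ge0 => j _; apply: mulr_ge0.
have Yb0 : forall w, 0 <= Yb w.
  by move=> w; apply: sumr_ge0 => j _; apply: mulr_ge0.
have iXs : (\int[P z]_(w in setT) (Xs w)%:E = (\sum_(j < m) lam j * G z j pz)%:E)%E.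
  rewrite /Xs; under eq_integral do rewrite -sumEFin.
  rewrite ge0_integral_sum //; last first.
  - by move=> j w _; rewrite lee_fin mulr_ge0.
  - by move=> j; apply/measurable_EFinP; apply: measurable_funM;
      [exact: measurable_cst | exact: measurable_indic].
  rewrite -sumEFin; apply: eq_bigr => j _.
  under eq_integral do rewrite EFinM.
  rewrite ge0_integralZl_EFin //; try by [move=> w _; rewrite lee_fin |
    apply/measurable_EFinP; exact: measurable_indic].
  rewrite integral_indic // setIT /SC.
  by rewrite [X in (_ * X)%E](_ : _ = (G z j pz)%:E) ?EFinM //; exact: hG.
have iYb : (\int[P z]_(w in setT) (Yb w)%:E = (\sum_(i < n) mu i * (1 - F z i pz))%:E)%E.
  rewrite /Yb; under eq_integral do rewrite -sumEFin.
  rewrite ge0_integral_sum //; last first.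
  - by move=> j w _; rewrite lee_fin mulr_ge0.
  - by move=> j; apply/measurable_EFinP; apply: measurable_funM;
      [exact: measurable_cst | exact: measurable_indic].
  rewrite -sumEFin; apply: eq_bigr => i _.
  under eq_integral do rewrite EFinM.
  rewrite ge0_integralZl_EFin //; try by [move=> w _; rewrite lee_fin |
    apply/measurable_EFinP; exact: measurable_indic].
  have hc : P z (~` [set w | b i w <= pz]) = (1 - F z i pz)%:E.
    rewrite probability_setC; first by rewrite hF EFinB.
    by have := measurable_fun_le measurableT (hb_meas i) (measurable_cst pz); rewrite setTI.
  rewrite integral_indic // setIT /SB.
  by rewrite [X in (_ * X)%E](_ : _ = (1 - F z i pz)%:E) ?EFinM //; exact: hc.
rewrite /expected_clearing_loss.
have [hpq|hpq] := leP pz qz.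
- apply: (@key _ _ _ (P z) (loss qz) (loss pz) Yb Xs (qz - pz)) => //.
  + by rewrite subr_ge0.
  + move=> w; rewrite /loss /clearing_loss /Xs /Yb !mulr_sumr.
    have h1 : \sum_(i < n) mu i * Num.max (b i w - pz) 0 <=
        \sum_(i < n) mu i * Num.max (b i w - qz) 0 +
        \sum_(i < n) (qz - pz) * (mu i * \1_(SB i) w).
      rewrite -big_split; apply: ler_sum => i _ /=.
      have hI : (\1_(SB i) w = 1 /\ pz < b i w) \/ (\1_(SB i) w = 0 /\ b i w <= pz)
        := @indicB _ _ (b i) pz w.
      have := @scale_le _ _ _ _ (hmu i) (@buyerA _ _ _ _ _ hpq hI); lra.
    have h2 : \sum_(j < m) lam j * Num.max (pz - c j w) 0 +
        \sum_(j < m) (qz - pz) * (lam j * \1_(SC j) w) <=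
        \sum_(j < m) lam j * Num.max (qz - c j w) 0.
      rewrite -big_split; apply: ler_sum => j _ /=.
      have hJ : (\1_(SC j) w = 1 /\ c j w <= pz) \/ (\1_(SC j) w = 0 /\ pz < c j w)
        := @indicC _ _ (c j) pz w.
      have := @scale_le _ _ _ _ (hlam j) (@sellerA _ _ _ _ _ hpq hJ); lra.
    lra.
  + by rewrite iYb iXs hbal.
  + by rewrite iYb.
- apply: (@key _ _ _ (P z) (loss qz) (loss pz) Xs Yb (pz - qz)) => //.
  + by rewrite subr_ge0 ltW.
  + move=> w; rewrite /loss /clearing_loss /Xs /Yb !mulr_sumr.
    have h1 : \sum_(i < n) mu i * Num.max (b i w - pz) 0 +
        \sum_(i < n) (pz - qz) * (mu i * \1_(SB i) w) <=
        \sum_(i < n) mu i * Num.max (b i w - qz) 0.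
      rewrite -big_split; apply: ler_sum => i _ /=.
      have hI : (\1_(SB i) w = 1 /\ pz < b i w) \/ (\1_(SB i) w = 0 /\ b i w <= pz)
        := @indicB _ _ (b i) pz w.
      have := @scale_le _ _ _ _ (hmu i) (@buyerB _ _ _ _ _ hpq hI); lra.
    have h2 : \sum_(j < m) lam j * Num.max (pz - c j w) 0 <=
        \sum_(j < m) lam j * Num.max (qz - c j w) 0 +
        \sum_(j < m) (pz - qz) * (lam j * \1_(SC j) w).
      rewrite -big_split; apply: ler_sum => j _ /=.
      have hJ : (\1_(SC j) w = 1 /\ c j w <= pz) \/ (\1_(SC j) w = 0 /\ pz < c j w)
        := @indicC _ _ (c j) pz w.
      have := @scale_le _ _ _ _ (hlam j) (@sellerB _ _ _ _ _ hpq hJ); lra.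
    lra.
  + by rewrite iYb iXs hbal.
  + by rewrite iXs.
Qed.
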